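(* Let $(\mathcal C,\otimes,I,a,l,r)$ be a monoidal category, let $(F,\Delta,\varepsilon,F_2,F_0)$ and $(G,\delta,\epsilon,G_2,G_0)$ be bicomonads on $\mathcal C$ and $\varphi:FG\to GF$ a comonad distributive law. Then $\varphi$ is a monoidal comonad distributive law if and only if the smash coproduct $FG$, i.e. the comonad with comultiplication $X\mapsto F\varphi_{GX}\circ FF\delta_X\circ\Delta_{GX}$ and counit $X\mapsto \epsilon_X\circ\varepsilon_{GX}$, equipped with the monoidal functor structure $(FG)_2(M,N)=F(G_2(M,N))\circ F_2(GM,GN)$ and $(FG)_0=F(G_0)\circ F_0$, is a bicomonad on $\mathcal C$.
   Context: A comonad $(F,\Delta,\varepsilon)$ on a category is an endofunctor with natural $\Delta:F\to FF$, $\varepsilon:F\to\mathrm{id}$ satisfying $F\Delta\circ\Delta=\Delta F\circ\Delta$, $F\varepsilon\circ\Delta=\varepsilon F\circ\Delta=\mathrm{id}_F$. For comonads $(F,\Delta,\varepsilon)$, $(G,\delta,\epsilon)$, a comonad distributive law is a natural $\varphi:FG\to GF$ with $G\varphi\circ\varphi G\circ F\delta=\delta F\circ\varphi$, $\varphi F\circ F\varphi\circ\Delta G=G\Delta\circ\varphi$, $G\varepsilon\circ\varphi=\varepsilon G$, $\epsilon F\circ\varphi=F\epsilon$; then $FG$ with the stated comultiplication and counit is a comonad. A bicomonad on a monoidal category is a comonad $(G,\delta,\epsilon)$ which is also a monoidal functor $(G,G_2,G_0)$ ($G_2(X,Y):GX\otimes GY\to G(X\otimes Y)$ natural, $G_0:I\to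 GI$, satisfying the usual coherence with $a,l,r$) such that $G(G_2(X,Y))\circ G_2(GX,GY)\circ(\delta_X\otimes\delta_Y)=\delta_{X\otimes Y}\circ G_2(X,Y)$, $\epsilon_{X\otimes Y}\circ G_2(X,Y)=\epsilon_X\otimes\epsilon_Y$, $G(G_0)\circ G_0=\delta_I\circ G_0$, $\epsilon_I\circ G_0=\mathrm{id}_I$. A comonad distributive law $\varphi$ between bicomonads $F,G$ is called monoidal if for all $M,N$: $\varphi_{M\otimes N}\circ F(G_2(M,N))\circ F_2(GM,GN)=G(F_2(M,N))\circ G_2(FM,FN)\circ(\varphi_M\otimes\varphi_N)$ and $\varphi_I\circ F(G_0)\circ F_0=G(F_0)\circ G_0$. *)

(* Defs.v *)
Record Category := {
  ob : Type;
  hom : ob -> ob -> Type;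
  idm : forall A, hom A A;
  comp : forall A B C, hom B C -> hom A B -> hom A C;
  comp_id_l : forall A B (f : hom A B), comp A B B (idm B) f = f;
  comp_id_r : forall A B (f : hom A B), comp A A B f (idm A) = f;
  comp_assoc : forall A B C D (f : hom C D) (g : hom B C) (h : hom A B),
      comp A C D f (comp A B C g h) = comp A B D (comp B C D f g) h
}.
Arguments hom {c} _ _.
Arguments idm {c} A.
Arguments comp {c A B C} _ _.
Coercion ob : Category >-> Sortclass.
Notation "f ∘ g" := (comp f g) (at level 40, left associativity).

Record MonoidalCategory := {
  mcat : Category;
  tens : ob mcat -> ob mcat -> ob mcat;
  tensm : forall A B C D, @hom mcat A B -> @hom mcat C D -> @hom mcat (tens A C) (tens B D);
  tensm_id : forall A B, tensm A A B B (idm A) (idm B) = idm (tens A B);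
  tensm_comp : forall A1 A2 A3 B1 B2 B3 (f1 : @hom mcat A1 A2) (f2 : @hom mcat A2 A3)
                 (g1 : @hom mcat B1 B2) (g2 : @hom mcat B2 B3),
      tensm A1 A3 B1 B3 (f2 ∘ f1) (g2 ∘ g1)
      = tensm A2 A3 B2 B3 f2 g2 ∘ tensm A1 A2 B1 B2 f1 g1;
  unitob : ob mcat;
  assoc : forall X Y Z, @hom mcat (tens (tens X Y) Z) (tens X (tens Y Z));
  assoc_inv : forall X Y Z, @hom mcat (tens X (tens Y Z)) (tens (tens X Y) Z);
  assoc_iso1 : forall X Y Z, assoc_inv X Y Z ∘ assoc X Y Z = idm _;
  assoc_iso2 : forall X Y Z, assoc X Y Z ∘ assoc_inv X Y Z = idm _;
  assoc_nat : forall X X' Y Y' Z Z' (f : @hom mcat X X') (g : @hom mcat Y Y') (h : @hom mcat Z Z'),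
      assoc X' Y' Z' ∘ tensm _ _ _ _ (tensm _ _ _ _ f g) h
      = tensm _ _ _ _ f (tensm _ _ _ _ g h) ∘ assoc X Y Z;
  lu : forall X, @hom mcat (tens unitob X) X;
  lu_inv : forall X, @hom mcat X (tens unitob X);
  lu_iso1 : forall X, lu_inv X ∘ lu X = idm _;
  lu_iso2 : forall X, lu X ∘ lu_inv X = idm _;
  lu_nat : forall X Y (f : @hom mcat X Y), f ∘ lu X = lu Y ∘ tensm _ _ _ _ (idm unitob) f;
  ru : forall X, @hom mcat (tens X unitob) X;
  ru_inv : forall X, @hom mcat X (tens X unitob);
  ru_iso1 : forall X, ru_inv X ∘ ru X = idm _;
  ru_iso2 : forall X, ru X ∘ ru_inv X = idm _;
  ru_nat : forall X Y (f : @hom mcat X Y), f ∘ ru X = ru Y ∘ tensm _ _ _ _ f (idm unitob);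
  pentagon : forall W X Y Z,
      assoc W X (tens Y Z) ∘ assoc (tens W X) Y Z
      = tensm _ _ _ _ (idm W) (assoc X Y Z) ∘ assoc W (tens X Y) Z
        ∘ tensm _ _ _ _ (assoc W X Y) (idm Z);
  triangle : forall X Y,
      tensm _ _ _ _ (idm X) (lu Y) ∘ assoc X unitob Y = tensm _ _ _ _ (ru X) (idm Y)
}.
Coercion mcat : MonoidalCategory >-> Category.
Arguments tens {m} _ _.
Arguments tensm {m A B C D} _ _.
Arguments unitob {m}.
Arguments assoc {m} X Y Z.
Arguments lu {m} X.
Arguments ru {m} X.
Notation "X ⊗ Y" := (tens X Y) (at level 30, right associativity).
Notation "f ⊗m g" := (tensm f g) (at level 30, right associativity).

Record Functor (C : Category) := {
  fob :> ob C -> ob C;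
  fmap : forall X Y, @hom C X Y -> @hom C (fob X) (fob Y);
  fmap_id : forall X, fmap X X (idm X) = idm (fob X);
  fmap_comp : forall X Y Z (g : @hom C Y Z) (f : @hom C X Y),
      fmap X Z (g ∘ f) = fmap Y Z g ∘ fmap X Y f
}.
Arguments fob {C} _ _.
Arguments fmap {C} f0 {X Y} _.

Definition compF {C : Category} (F G : Functor C) : Functor C.
Proof.
  refine {| fob := fun X => F (G X);
            fmap := fun X Y f => fmap F (fmap G f) |}.
  - intro X. rewrite (fmap_id _ G), (fmap_id _ F). reflexivity.
  - intros X Y Z g f. rewrite (fmap_comp _ G), (fmap_comp _ F). reflexivity.
Defined.

Definition is_comonad {C : Category} (F : Functor C)
    (D : forall X, @hom C (F X) (F (F X))) (e : forall X, @hom C (F X) X) : Prop :=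
  (forall X Y (f : @hom C X Y), D Y ∘ fmap F f = fmap F (fmap F f) ∘ D X) /\
  (forall X Y (f : @hom C X Y), e Y ∘ fmap F f = f ∘ e X) /\
  (forall X, fmap F (D X) ∘ D X = D (F X) ∘ D X) /\
  (forall X, fmap F (e X) ∘ D X = idm (F X)) /\
  (forall X, e (F X) ∘ D X = idm (F X)).

Definition is_monoidal_functor {C : MonoidalCategory} (F : Functor C)
    (F2 : forall X Y : ob C, @hom C (F X ⊗ F Y) (F (X ⊗ Y)))
    (F0 : @hom C unitob (F unitob)) : Prop :=
  (forall X X' Y Y' (f : @hom C X X') (g : @hom C Y Y'),
      F2 X' Y' ∘ (fmap F f ⊗m fmap F g) = fmap F (f ⊗m g) ∘ F2 X Y) /\
  (forall X Y Z,
      fmap F (assoc X Y Z) ∘ F2 (X ⊗ Y) Z ∘ (F2 X Y ⊗m idm (F Z))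
      = F2 X (Y ⊗ Z) ∘ (idm (F X) ⊗m F2 Y Z) ∘ assoc (F X) (F Y) (F Z)) /\
  (forall X, fmap F (lu X) ∘ F2 unitob X ∘ (F0 ⊗m idm (F X)) = lu (F X)) /\
  (forall X, fmap F (ru X) ∘ F2 X unitob ∘ (idm (F X) ⊗m F0) = ru (F X)).

Definition is_bicomonad {C : MonoidalCategory} (G : Functor C)
    (d : forall X, @hom C (G X) (G (G X))) (e : forall X, @hom C (G X) X)
    (G2 : forall X Y : ob C, @hom C (G X ⊗ G Y) (G (X ⊗ Y)))
    (G0 : @hom C unitob (G unitob)) : Prop :=
  is_comonad G d e /\ is_monoidal_functor G G2 G0 /\
  (forall X Y, fmap G (G2 X Y) ∘ G2 (G X) (G Y) ∘ (d X ⊗m d Y) = d (X ⊗ Y) ∘ G2 X Y) /\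
  (forall X Y, e (X ⊗ Y) ∘ G2 X Y = e X ⊗m e Y) /\
  (fmap G G0 ∘ G0 = d unitob ∘ G0) /\
  (e unitob ∘ G0 = idm unitob).

Definition is_distributive_law {C : Category} (F G : Functor C)
    (DF : forall X, @hom C (F X) (F (F X))) (eF : forall X, @hom C (F X) X)
    (DG : forall X, @hom C (G X) (G (G X))) (eG : forall X, @hom C (G X) X)
    (phi : forall X, @hom C (F (G X)) (G (F X))) : Prop :=
  (forall X Y (f : @hom C X Y), phi Y ∘ fmap F (fmap G f) = fmap G (fmap F f) ∘ phi X) /\
  (forall X, fmap G (phi X) ∘ phi (G X) ∘ fmap F (DG X) = DG (F X) ∘ phi X) /\
  (forall X, phi (F X) ∘ fmap F (phi X) ∘ DF (G X) = fmap G (DF X) ∘ phi X) /\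
  (forall X, fmap G (eF X) ∘ phi X = eF (G X)) /\
  (forall X, eG (F X) ∘ phi X = fmap F (eG X)).

Definition is_monoidal_law {C : MonoidalCategory} (F G : Functor C)
    (F2 : forall X Y : ob C, @hom C (F X ⊗ F Y) (F (X ⊗ Y))) (F0 : @hom C unitob (F unitob))
    (G2 : forall X Y : ob C, @hom C (G X ⊗ G Y) (G (X ⊗ Y))) (G0 : @hom C unitob (G unitob))
    (phi : forall X, @hom C (F (G X)) (G (F X))) : Prop :=
  (forall M N, phi (M ⊗ N) ∘ fmap F (G2 M N) ∘ F2 (G M) (G N)
               = fmap G (F2 M N) ∘ G2 (F M) (F N) ∘ (phi M ⊗m phi N)) /\
  (phi unitob ∘ fmap F G0 ∘ F0 = fmap G F0 ∘ G0).

Definition smash_comult {C : Category} (F G : Functor C)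
    (DF : forall X, @hom C (F X) (F (F X))) (DG : forall X, @hom C (G X) (G (G X)))
    (phi : forall X, @hom C (F (G X)) (G (F X)))
    (X : ob C) : @hom C (compF F G X) (compF F G (compF F G X)) :=
  fmap F (phi (G X)) ∘ fmap F (fmap F (DG X)) ∘ DF (G X).

Definition smash_counit {C : Category} (F G : Functor C)
    (eF : forall X, @hom C (F X) X) (eG : forall X, @hom C (G X) X)
    (X : ob C) : @hom C (compF F G X) X :=
  eG X ∘ eF (G X).

Definition smash_mon2 {C : MonoidalCategory} (F G : Functor C)
    (F2 : forall X Y : ob C, @hom C (F X ⊗ F Y) (F (X ⊗ Y)))
    (G2 : forall X Y : ob C, @hom C (G X ⊗ G Y) (G (X ⊗ Y)))
    (M N : ob C) : @hom C (compF F G M ⊗ compF F G N) (compF F G (M ⊗ N)) :=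
  fmap F (G2 M N) ∘ F2 (G M) (G N).

Definition smash_mon0 {C : MonoidalCategory} (F G : Functor C)
    (F0 : @hom C unitob (F unitob)) (G0 : @hom C unitob (G unitob))
    : @hom C unitob (compF F G unitob) :=
  fmap F G0 ∘ F0.

(* Main.v *)
Require Import Defs.

Lemma pre2 {C : Category} {A K D E : C} {x : hom K D} {y : hom A K} {z : hom A D}
  (H : x ∘ y = z) (a : hom D E) : a ∘ x ∘ y = a ∘ z.
Proof. rewrite <- H, ?comp_assoc; reflexivity. Qed.
Lemma pre3 {C : Category} {A K1 K2 D E : C} {x : hom K2 D} {y : hom K1 K2} {w : hom A K1} {z : hom A D}
  (H : x ∘ y ∘ w = z) (a : hom D E) : a ∘ x ∘ y ∘ w = a ∘ z.
Proof. rewrite <- H, ?comp_assoc; reflexivity. Qed.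
Lemma pre4 {C : Category} {A K1 K2 K3 D E : C} {x : hom K3 D} {y : hom K2 K3} {w : hom K1 K2} {v : hom A K1} {z : hom A D}
  (H : x ∘ y ∘ w ∘ v = z) (a : hom D E) : a ∘ x ∘ y ∘ w ∘ v = a ∘ z.
Proof. rewrite <- H, ?comp_assoc; reflexivity. Qed.
Lemma pre5 {C : Category} {A K0 K1 K2 K3 D E : C} {x : hom K3 D} {y : hom K2 K3} {w : hom K1 K2} {v : hom K0 K1} {u : hom A K0} {z : hom A D}
  (H : x ∘ y ∘ w ∘ v ∘ u = z) (a : hom D E) : a ∘ x ∘ y ∘ w ∘ v ∘ u = a ∘ z.
Proof. rewrite <- H, ?comp_assoc; reflexivity. Qed.

Lemma fm2 {C : Category} (F : Functor C) {A K D : C} {x : hom K D} {y : hom A K} {z : hom A D}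
  (H : x ∘ y = z) : fmap F x ∘ fmap F y = fmap F z.
Proof. rewrite <- H, fmap_comp; reflexivity. Qed.
Lemma fm3 {C : Category} (F : Functor C) {A K1 K2 D : C} {x : hom K2 D} {y : hom K1 K2} {w : hom A K1} {z : hom A D}
  (H : x ∘ y ∘ w = z) : fmap F x ∘ fmap F y ∘ fmap F w = fmap F z.
Proof. rewrite <- H, !fmap_comp; reflexivity. Qed.
Lemma fm4 {C : Category} (F : Functor C) {A K1 K2 K3 D : C} {x : hom K3 D} {y : hom K2 K3} {w : hom K1 K2} {v : hom A K1} {z : hom A D}
  (H : x ∘ y ∘ w ∘ v = z) : fmap F x ∘ fmap F y ∘ fmap F w ∘ fmap F v = fmap F z.
Proof. rewrite <- H, !fmap_comp; reflexivity. Qed.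
Lemma fm1 {C : Category} (F : Functor C) {A : C} {x : hom A A}
  (H : x = idm A) : fmap F x = idm (F A).
Proof. rewrite H, fmap_id; reflexivity. Qed.

Lemma fmapFG {C : Category} (F G : Functor C) {X Y : C} (f : hom X Y) :
  fmap (compF F G) f = fmap F (fmap G f).
Proof. reflexivity. Qed.
Ltac nrm := rewrite ?fmapFG, ?fmap_comp, ?fmap_id, ?comp_assoc, ?comp_id_l, ?comp_id_r, ?comp_assoc.
Ltac nrmin H := rewrite ?fmap_comp, ?fmap_id, ?comp_assoc, ?comp_id_l, ?comp_id_r, ?comp_assoc in H.
Tactic Notation "rw" open_constr(t) := first [ erewrite t | erewrite (pre2 t) | erewrite (pre3 t) | erewrite (pre4 t) | erewrite (pre5 t)]; nrm.

Lemma smash_comonad (C : Category) (F G : Functor C)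
    (DF : forall X, @hom C (F X) (F (F X))) (eF : forall X, @hom C (F X) X)
    (DG : forall X, @hom C (G X) (G (G X))) (eG : forall X, @hom C (G X) X)
    (phi : forall X, @hom C (F (G X)) (G (F X))) :
  is_comonad F DF eF -> is_comonad G DG eG -> is_distributive_law F G DF eF DG eG phi ->
  let D X : hom (F (G X)) (F (G (F (G X)))) := fmap F (phi (G X)) ∘ fmap F (fmap F (DG X)) ∘ DF (G X) in
  let e X : hom (F (G X)) X := eG X ∘ eF (G X) in
  (forall X Y (f : @hom C X Y), D Y ∘ fmap F (fmap G f) = fmap F (fmap G (fmap F (fmap G f))) ∘ D X) /\
  (forall X Y (f : @hom C X Y), e Y ∘ fmap F (fmap G f) = f ∘ e X) /\
  (forall X, fmap F (fmap G (D X)) ∘ D X = D (F (G X)) ∘ D X) /\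
  (forall X, fmap F (fmap G (e X)) ∘ D X = idm (F (G X))) /\
  (forall X, e (F (G X)) ∘ D X = idm (F (G X))).
Proof.
  intros [hFn [hFen [hFa [hFl hFr]]]] [hGn [hGen [hGa [hGl hGr]]]] [pn [p2 [p3 [p4 p5]]]] D e.
  subst D e; cbv beta.
  split; [|split; [|split; [|split]]].
  - intros X Y f. nrm. rw (hFn _ _ _). rw (fm2 F (fm2 F (hGn _ _ f))).
    rw (fm2 F (pn _ _ (fmap G f))). reflexivity.
  - intros X Y f. nrm. rw (hFen _ _ _). rw (hGen _ _ _). reflexivity.
  - intros X. nrm. rw (fm2 F (eq_sym (p3 _))). rw (fm2 F (eq_sym (pn _ _ (fmap F (DG X))))). rw (fm2 F (eq_sym (pn _ _ (phi (G X))))). rw (fm2 F (hFn _ _ (DG X))). rw (hFa _). rw (fm2 F (fm2 F (eq_sym (pn _ _ (DG X))))). rw (fm2 F (fm2 F (fm2 F (hGa X)))). rw (fm3 F (fm3 F (p2 (G X)))). rw (hFn _ _ (phi (G X))). rw (hFn _ _ (fmap F (DG X))). reflexivity.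
  - intros X. nrm. rw (fm2 F (p4 _)). rw (fm2 F (hFen _ _ _)). rw (fm2 F (hGl _)). rw (hFl _). reflexivity.
  - intros X. nrm. rw (hFen _ _ _). rw (hFen _ _ _). rw (hFr _). rw (p5 _). rw (fm2 F (hGr _)). reflexivity.
Qed.

Lemma tl {C : MonoidalCategory} {A B D Z : C} (a : hom B D) (b : hom A B) :
  tensm (a ∘ b) (idm Z) = tensm a (idm Z) ∘ tensm b (idm Z).
Proof. rewrite <- tensm_comp, comp_id_l. reflexivity. Qed.
Lemma tr {C : MonoidalCategory} {A B D Z : C} (a : hom B D) (b : hom A B) :
  tensm (idm Z) (a ∘ b) = tensm (idm Z) a ∘ tensm (idm Z) b.
Proof. rewrite <- tensm_comp, comp_id_l. reflexivity. Qed.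

Lemma nat_l {C : MonoidalCategory} (F : Functor C) F2 F0 : is_monoidal_functor F F2 F0 ->
  forall X X' Y (f : hom X X'), F2 X' Y ∘ (fmap F f ⊗m idm (F Y)) = fmap F (f ⊗m idm Y) ∘ F2 X Y.
Proof. intros [hn _] X X' Y f. rewrite <- (fmap_id _ F Y). apply hn. Qed.
Lemma nat_r {C : MonoidalCategory} (F : Functor C) F2 F0 : is_monoidal_functor F F2 F0 ->
  forall X Y Y' (f : hom Y Y'), F2 X Y' ∘ (idm (F X) ⊗m fmap F f) = fmap F (idm X ⊗m f) ∘ F2 X Y.
Proof. intros [hn _] X Y Y' f. rewrite <- (fmap_id _ F X). apply hn. Qed.

Lemma smash_monoidal (C : MonoidalCategory) (F G : Functor C)
    (F2 : forall X Y : ob C, @hom C (F X ⊗ F Y) (F (X ⊗ Y))) (F0 : @hom C unitob (F unitob))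
    (G2 : forall X Y : ob C, @hom C (G X ⊗ G Y) (G (X ⊗ Y))) (G0 : @hom C unitob (G unitob)) :
  is_monoidal_functor F F2 F0 -> is_monoidal_functor G G2 G0 ->
  let H2 X Y : hom (F (G X) ⊗ F (G Y)) (F (G (X ⊗ Y))) := fmap F (G2 X Y) ∘ F2 (G X) (G Y) in
  let H0 : hom unitob (F (G unitob)) := fmap F G0 ∘ F0 in
  (forall X X' Y Y' (f : hom X X') (g : hom Y Y'), H2 X' Y' ∘ (fmap F (fmap G f) ⊗m fmap F (fmap G g)) = fmap F (fmap G (f ⊗m g)) ∘ H2 X Y) /\
  (forall X Y Z, fmap F (fmap G (assoc X Y Z)) ∘ H2 (X ⊗ Y) Z ∘ (H2 X Y ⊗m idm (F (G Z))) = H2 X (Y ⊗ Z) ∘ (idm (F (G X)) ⊗m H2 Y Z) ∘ assoc (F (G X)) (F (G Y)) (F (G Z))) /\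
  (forall X, fmap F (fmap G (lu X)) ∘ H2 unitob X ∘ (H0 ⊗m idm (F (G X))) = lu (F (G X))) /\
  (forall X, fmap F (fmap G (ru X)) ∘ H2 X unitob ∘ (idm (F (G X)) ⊗m H0) = ru (F (G X))).
Proof.
  intros mF mG H2 H0. pose proof (nat_l _ _ _ mF) as nl. pose proof (nat_r _ _ _ mF) as nr.
  destruct mF as [hFn [hFa [hFl hFr]]]. destruct mG as [hGn [hGa [hGl hGr]]].
  subst H2 H0; cbv beta.
  split; [|split; [|split]].
  - intros. nrm. rw (hFn _ _ _ _ _ _). rw (fm2 F (hGn _ _ _ _ _ _)). reflexivity.
  - intros. rewrite !tl, !tr. nrm. rw (nl _ _ _ _). rw (fm3 F (hGa _ _ _)). rw (hFa _ _ _).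
    rw (eq_sym (nr _ _ _ _)). reflexivity.
  - intros. rewrite !tl. nrm. rw (nl _ _ _ _). rw (fm3 F (hGl _)). rw (hFl _). reflexivity.
  - intros. rewrite !tr. nrm. rw (nr _ _ _ _). rw (fm3 F (hGr _)). rw (hFr _). reflexivity.
Qed.


Lemma smash_counits (C : MonoidalCategory) (F G : Functor C)
    (DF : forall X, @hom C (F X) (F (F X))) (eF : forall X, @hom C (F X) X)
    (F2 : forall X Y : ob C, @hom C (F X ⊗ F Y) (F (X ⊗ Y))) (F0 : @hom C unitob (F unitob))
    (DG : forall X, @hom C (G X) (G (G X))) (eG : forall X, @hom C (G X) X)
    (G2 : forall X Y : ob C, @hom C (G X ⊗ G Y) (G (X ⊗ Y))) (G0 : @hom C unitob (G unitob)) :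
  is_bicomonad F DF eF F2 F0 -> is_bicomonad G DG eG G2 G0 ->
  let H2 X Y : hom (F (G X) ⊗ F (G Y)) (F (G (X ⊗ Y))) := fmap F (G2 X Y) ∘ F2 (G X) (G Y) in
  let H0 : hom unitob (F (G unitob)) := fmap F G0 ∘ F0 in
  let e X : hom (F (G X)) X := eG X ∘ eF (G X) in
  (forall X Y, e (X ⊗ Y) ∘ H2 X Y = e X ⊗m e Y) /\ (e unitob ∘ H0 = idm unitob).
Proof.
  intros [[_ [hFen _]] [_ [_ [hFe [_ hFe0]]]]] [[_ [hGen _]] [_ [_ [hGe [_ hGe0]]]]] H2 H0 e.
  subst H2 H0 e; cbv beta. split.
  - intros. rewrite tensm_comp. nrm. rw (hFen _ _ _). rw (hFe _ _). rw (hGe _ _). reflexivity.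
  - nrm. rw (hFen _ _ _). rw hGe0. rw hFe0. reflexivity.
Qed.


Lemma smash_fwd (C : MonoidalCategory) (F G : Functor C)
    (DF : forall X, @hom C (F X) (F (F X))) (eF : forall X, @hom C (F X) X)
    (F2 : forall X Y : ob C, @hom C (F X ⊗ F Y) (F (X ⊗ Y))) (F0 : @hom C unitob (F unitob))
    (DG : forall X, @hom C (G X) (G (G X))) (eG : forall X, @hom C (G X) X)
    (G2 : forall X Y : ob C, @hom C (G X ⊗ G Y) (G (X ⊗ Y))) (G0 : @hom C unitob (G unitob))
    (phi : forall X, @hom C (F (G X)) (G (F X))) :
  is_bicomonad F DF eF F2 F0 -> is_bicomonad G DG eG G2 G0 ->
  is_distributive_law F G DF eF DG eG phi ->
  is_monoidal_law F G F2 F0 G2 G0 phi ->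
  let H2 X Y : hom (F (G X) ⊗ F (G Y)) (F (G (X ⊗ Y))) := fmap F (G2 X Y) ∘ F2 (G X) (G Y) in
  let H0 : hom unitob (F (G unitob)) := fmap F G0 ∘ F0 in
  let D X : hom (F (G X)) (F (G (F (G X)))) := fmap F (phi (G X)) ∘ fmap F (fmap F (DG X)) ∘ DF (G X) in
  (forall X Y, fmap F (fmap G (H2 X Y)) ∘ H2 (F (G X)) (F (G Y)) ∘ (D X ⊗m D Y) = D (X ⊗ Y) ∘ H2 X Y) /\
  (fmap F (fmap G H0) ∘ H0 = D unitob ∘ H0).
Proof.
  intros [[hFn _] [[hFmn _] [hFc [_ [hFc0 _]]]]] [[hGn _] [[hGmn _] [hGc [_ [hGc0 _]]]]]
    [pn _] [ml ml0] H2 H0 D.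
  subst H2 H0 D; cbv beta. split.
  - intros M N. rewrite !tensm_comp. nrm.
    rw (hFmn _ _ _ _ _ _). rw (hFmn _ _ _ _ _ _).
    rw (fm3 F (eq_sym (ml (G M) (G N)))).
    rw (fm2 F (eq_sym (pn _ _ (G2 M N)))).
    rw (fm2 F (hFmn _ _ _ _ _ _)).
    rw (fm3 F (fm3 F (hGc M N))).
    rw (hFc _ _).
    rw (hFn _ _ (G2 M N)). reflexivity.
  - nrm. rw (hFn _ _ G0). rw (eq_sym hFc0). rw (fm2 F (fm2 F (eq_sym hGc0))).
    rw (fm2 F (pn _ _ G0)). rw (fm3 F ml0). reflexivity.
Qed.


Lemma smash_bwd (C : MonoidalCategory) (F G : Functor C)
    (DF : forall X, @hom C (F X) (F (F X))) (eF : forall X, @hom C (F X) X)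
    (F2 : forall X Y : ob C, @hom C (F X ⊗ F Y) (F (X ⊗ Y))) (F0 : @hom C unitob (F unitob))
    (DG : forall X, @hom C (G X) (G (G X))) (eG : forall X, @hom C (G X) X)
    (G2 : forall X Y : ob C, @hom C (G X ⊗ G Y) (G (X ⊗ Y))) (G0 : @hom C unitob (G unitob))
    (phi : forall X, @hom C (F (G X)) (G (F X))) :
  is_bicomonad F DF eF F2 F0 -> is_bicomonad G DG eG G2 G0 ->
  is_distributive_law F G DF eF DG eG phi ->
  let H2 X Y : hom (F (G X) ⊗ F (G Y)) (F (G (X ⊗ Y))) := fmap F (G2 X Y) ∘ F2 (G X) (G Y) in
  let H0 : hom unitob (F (G unitob)) := fmap F G0 ∘ F0 in
  let D X : hom (F (G X)) (F (G (F (G X)))) := fmap F (phi (G X)) ∘ fmap F (fmap F (DG X)) ∘ DF (G X) in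
  (forall X Y, fmap F (fmap G (H2 X Y)) ∘ H2 (F (G X)) (F (G Y)) ∘ (D X ⊗m D Y) = D (X ⊗ Y) ∘ H2 X Y) ->
  (fmap F (fmap G H0) ∘ H0 = D unitob ∘ H0) ->
  is_monoidal_law F G F2 F0 G2 G0 phi.
Proof.
  intros [[hFn [hFen [_ [_ hFr]]]] [[hFmn _] [_ [hFe [_ hFe0]]]]]
         [[hGn [hGen [_ [hGl _]]]] [[hGmn _] [_ [hGe [_ hGe0]]]]]
         [pn _] H2 H0 D ha hc.
  assert (phiD : forall X, fmap G (fmap F (eG X)) ∘ eF (G (F (G X))) ∘ fmap F (phi (G X))
                   ∘ fmap F (fmap F (DG X)) ∘ DF (G X) = phi X).
  { intros X. rw (hFen _ _ _). rw (hFen _ _ _). rw (hFr _). rw (eq_sym (pn _ _ _)).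
    rw (fm2 F (hGl _)). reflexivity. }
  subst H2 H0 D; cbv beta in *. split.
  - intros M N. specialize (ha M N). rewrite !tensm_comp in ha. nrmin ha.
    rewrite <- (phiD (M ⊗ N)), <- (phiD M), <- (phiD N). rewrite !tensm_comp. nrm.
    rw (eq_sym ha).
    rw (hFen _ _ _). rw (hFen _ _ _). rw (hFen _ _ _). rw (hFe _ _).
    rw (fm2 G (fm2 F (hGe _ _))). rw (fm2 G (eq_sym (hFmn _ _ _ _ _ _))).
    rw (eq_sym (hGmn _ _ _ _ _ _)). reflexivity.
  - nrmin hc. rewrite <- (phiD unitob). nrm. rw (eq_sym hc).
    rw (hFen _ _ _). rw (hFen _ _ _). rw (hFen _ _ _). rw hFe0.
    rw (fm2 G (fm2 F hGe0)).  reflexivity.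
Qed.

Theorem lemma3p4 (C : MonoidalCategory) (F G : Functor C)
    (DF : forall X, @hom C (F X) (F (F X))) (eF : forall X, @hom C (F X) X)
    (F2 : forall X Y : ob C, @hom C (F X ⊗ F Y) (F (X ⊗ Y))) (F0 : @hom C unitob (F unitob))
    (DG : forall X, @hom C (G X) (G (G X))) (eG : forall X, @hom C (G X) X)
    (G2 : forall X Y : ob C, @hom C (G X ⊗ G Y) (G (X ⊗ Y))) (G0 : @hom C unitob (G unitob))
    (phi : forall X, @hom C (F (G X)) (G (F X))) :
  is_bicomonad F DF eF F2 F0 ->
  is_bicomonad G DG eG G2 G0 ->
  is_distributive_law F G DF eF DG eG phi ->
  (is_monoidal_law F G F2 F0 G2 G0 phi <->
   is_bicomonad (compF F G) (smash_comult F G DF DG phi) (smash_counit F G eF eG)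
                (smash_mon2 F G F2 G2) (smash_mon0 F G F0 G0)).
Proof.
  intros hF hG hd. split.
  - intro ml.
    pose proof (smash_fwd C F G DF eF F2 F0 DG eG G2 G0 phi hF hG hd ml) as fw. cbv zeta in fw.
    destruct fw as [ha hc].
    pose proof (smash_counits C F G DF eF F2 F0 DG eG G2 G0 hF hG) as cu. cbv zeta in cu.
    destruct cu as [hb he].
    destruct hF as [cF [mF _]]. destruct hG as [cG [mG _]].
    split; [exact (smash_comonad C F G DF eF DG eG phi cF cG hd) |].
    split; [exact (smash_monoidal C F G F2 F0 G2 G0 mF mG) |].
    exact (conj ha (conj hb (conj hc he))).
  - intros [_ [_ [ha [_ [hc _]]]]].
    exact (smash_bwd C F G DF eF F2 F0 DG eG G2 G0 phi hF hG hd ha hc).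
Qed.
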